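(* Let $L$ be an interval locale. If $F$ is a presheaf of monomorphisms on $L_{+}$, then $LF$ is a sheaf of monomorphisms on $L_{+}$. Consequently the associated sheaf functor $L^2:\mathbf{Pre}(L_{+})\to\mathbf{Shv}(L_{+})$ restricts to a functor $\mathbf{Mon}_p(L_{+})\to\mathbf{Mon}(L_{+})$ (which agrees with $L$ on these objects).
   Context: A locale $L$ is a complete lattice in which finite meets distribute over arbitrary joins, with Grothendieck topology: $\{b_j\le a\}$ covers $a$ iff $\bigvee_j b_j=a$; sheaves are presheaves $F$ with $F(a)\to\varprojlim_{b\in R}F(b)$ bijective for all covering sieves $R$. $L$ is an interval if it is totally ordered and densely ordered ($a<b$ implies there is $s$ with $a<s<b$). $i$ is the bottom element of $L$; $L_{+}=L\sqcup\{0\}$ with a new bottom $0<i$. A presheaf of monomorphisms on $L_{+}$ is a functor $F:(L_{+})^{op}\to\mathbf{Set}$ with $F(0)=\ast$ and $F(b)\to F(a)$ injective for all $a\le b$ in $L$; these form $\mathbf{Mon}_p(L_{+})$. A sheaf of monomorphisms is a sheaf with this property; they form $\mathbf{Mon}(L_{+})$. For a presheaf $F$ on $L_{+}$, $LF(a)=\varprojlim_{0<b<a}F(b)$ for $a\in L$, $a\ne i$, $LF(i)=F(i)$, $LF(0)=\ast$. *)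

(* Defs.v *)
From Stdlib Require Import ClassicalEpsilon.

Definition is_lub {P : Type} (le : P -> P -> Prop) (S : P -> Prop) (a : P) : Prop :=
  (forall b, S b -> le b a) /\ (forall c, (forall b, S b -> le b c) -> le a c).

Definition is_meet {P : Type} (le : P -> P -> Prop) (a b m : P) : Prop :=
  le m a /\ le m b /\ (forall c, le c a -> le c b -> le c m).

Record locale : Type := Locale {
  lcar :> Type;
  lle : lcar -> lcar -> Prop;
  lle_refl : forall a, lle a a;
  lle_trans : forall a b c, lle a b -> lle b c -> lle a c;
  lle_antisym : forall a b, lle a b -> lle b a -> a = b;
  lsup_ex : forall S : lcar -> Prop, exists s, is_lub lle S s;
  lmeet_ex : forall a b, exists m, is_meet lle a b m;
  ldistr : forall (a : lcar) (S : lcar -> Prop) (s m : lcar),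
      is_lub lle S s -> is_meet lle a s m ->
      is_lub lle (fun c => exists b, S b /\ is_meet lle a b c) m }.

Arguments lle {l} _ _.
Arguments lle_refl {l} _.
Arguments lle_trans {l} _ _ _ _ _.
Arguments lle_antisym {l} _ _ _ _.

Definition llt {L : locale} (a b : L) : Prop := lle a b /\ a <> b.

Definition is_interval (L : locale) : Prop :=
  (forall a b : L, lle a b \/ lle b a) /\
  (forall a b : L, llt a b -> exists s, llt a s /\ llt s b).

(* order on L_+ = option L, with None the new bottom 0 *)
Definition lep {L : locale} (x y : option L) : Prop :=
  match x, y with
  | None, _ => True
  | Some _, None => False
  | Some a, Some b => lle a b
  end.

Record psh_data (P : Type) (le : P -> P -> Prop) : Type := PshData {
  ob : P -> Type;
  res : forall x y, le x y -> ob y -> ob x }.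
Arguments PshData {P le} _ _.
Arguments ob {P le} _ _.
Arguments res {P le} _ x y _ _.

Definition is_presheaf {P : Type} {le : P -> P -> Prop} (G : psh_data P le) : Prop :=
  (forall x (h : le x x) t, res G x x h t = t) /\
  (forall x y z (hxy : le x y) (hyz : le y z) (hxz : le x z) t,
      res G x y hxy (res G y z hyz t) = res G x z hxz t).

Definition Psh (L : locale) : Type := psh_data (option L) lep.

Definition is_mon {L : locale} (G : Psh L) : Prop :=
  (exists t0 : ob G None, forall t, t = t0) /\
  (forall (a b : L) (h : lle a b) (u v : ob G (Some b)),
      res G (Some a) (Some b) h u = res G (Some a) (Some b) h v -> u = v).

Definition is_covering_sieve {L : locale} (x : option L) (R : option L -> Prop) : Prop :=
  (forall y, R y -> lep y x) /\ (forall y z, R z -> lep y z -> R y) /\ is_lub lep R x.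

(* elements of lim_{y in R} G(y) *)
Definition is_matching {L : locale} (G : Psh L) (R : option L -> Prop)
  (s : forall y, R y -> ob G y) : Prop :=
  forall y z (hy : R y) (hz : R z) (h : lep y z), res G y z h (s z hz) = s y hy.

Definition is_sheaf {L : locale} (G : Psh L) : Prop :=
  forall x R, is_covering_sieve x R ->
  forall s, is_matching G R s ->
  exists! t : ob G x, forall y (hy : R y) (hyx : lep y x), res G y x hyx t = s y hy.

Definition is_mon_presheaf {L : locale} (G : Psh L) : Prop := is_presheaf G /\ is_mon G.
Definition is_mon_sheaf {L : locale} (G : Psh L) : Prop :=
  is_presheaf G /\ is_sheaf G /\ is_mon G.

Definition psh_iso {L : locale} (G H : Psh L) : Prop :=
  exists phi : forall x, ob G x -> ob H x,
    (forall x, (forall u v, phi x u = phi x v -> u = v) /\ (forall w, exists u, phi x u = w)) /\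
    (forall x y (h : lep x y) t, phi x (res G x y h t) = res H x y h (phi y t)).

(* lim_{0 < b < a} G(b) : compatible families over {c : L | c < a} *)
Definition Fam {L : locale} (G : Psh L) (a : L) : Type :=
  { s : forall c : L, llt c a -> ob G (Some c) |
    forall c c' (hc : llt c a) (hc' : llt c' a) (h : lle c c'),
      res G (Some c) (Some c') h (s c' hc') = s c hc }.

Definition em (P : Prop) : {P} + {~ P} := excluded_middle_informative P.

Definition LFob {L : locale} (i : L) (G : Psh L) (x : option L) : Type :=
  match x with
  | None => unit
  | Some a => if em (a = i) then ob G (Some a) else Fam G a
  end.

Lemma llt_lle_trans {L : locale} {c a b : L} : llt c a -> lle a b -> llt c b.
Proof.
  intros [h1 h2] h. split.
  - exact (lle_trans _ _ _ h1 h).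
  - intro e. subst. apply h2. apply lle_antisym; assumption.
Qed.

Lemma eq_neq_llt {L : locale} {i a b : L} : a = i -> b <> i -> lle a b -> llt a b.
Proof. intros e n h. split; [exact h|]. intro e'. subst. apply n; reflexivity. Qed.

Lemma bot_absurd {L : locale} {i a b : L} (Hi : forall a : L, lle i a) :
  a <> i -> b = i -> lle a b -> False.
Proof. intros n e h. subst. apply n. apply lle_antisym; auto. Qed.

Definition fam_restr {L : locale} (G : Psh L) {a b : L} (h : lle a b) (s : Fam G b) : Fam G a :=
  exist (fun t : forall c : L, llt c a -> ob G (Some c) =>
           forall c c' (hc : llt c a) (hc' : llt c' a) (h : lle c c'),
             res G (Some c) (Some c') h (t c' hc') = t c hc)
        (fun c hc => proj1_sig s c (llt_lle_trans hc h))
        (fun c c' hc hc' hcc' =>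
           proj2_sig s c c' (llt_lle_trans hc h) (llt_lle_trans hc' h) hcc').

Definition LFres_SS {L : locale} (i : L) (Hi : forall a : L, lle i a) (G : Psh L)
  (a b : L) (h : lle a b) (da : {a = i} + {a <> i}) (db : {b = i} + {b <> i}) :
  (if db then ob G (Some b) else Fam G b) -> (if da then ob G (Some a) else Fam G a) :=
  match da as da0, db as db0
    return ((if db0 then ob G (Some b) else Fam G b) -> (if da0 then ob G (Some a) else Fam G a))
  with
  | left _, left _ => fun y => res G (Some a) (Some b) h y
  | left ea, right nb => fun s => proj1_sig s a (eq_neq_llt ea nb h)
  | right na, left eb => fun _ => False_rect _ (bot_absurd Hi na eb h)
  | right _, right _ => fun s => fam_restr G h s
  end.

Definition LFres {L : locale} (i : L) (Hi : forall a : L, lle i a) (G : Psh L)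
  (x y : option L) : lep x y -> LFob i G y -> LFob i G x :=
  match x as x0, y as y0 return lep x0 y0 -> LFob i G y0 -> LFob i G x0 with
  | None, _ => fun _ _ => tt
  | Some a, None => fun h _ => False_rect _ h
  | Some a, Some b => fun h => LFres_SS i Hi G a b h (em (a = i)) (em (b = i))
  end.

Definition LF {L : locale} (i : L) (Hi : forall a : L, lle i a) (G : Psh L) : Psh L :=
  PshData (LFob i G) (LFres i Hi G).

(* Main.v *)
Require Import Defs.
From Stdlib Require Import ClassicalEpsilon ProofIrrelevance FunctionalExtensionality Classical.

Definition toFam {L : locale} (i : L) (G : Psh L) (d : L) (n : d <> i) :
  LFob i G (Some d) -> Fam G d :=
  match em (d = i) as e return (if e then ob G (Some d) else Fam G d) -> Fam G d with
  | left e => fun _ => False_rect _ (n e)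
  | right _ => fun s => s end.

Definition ofFam {L : locale} (i : L) (G : Psh L) (d : L) (n : d <> i) :
  Fam G d -> LFob i G (Some d) :=
  match em (d = i) as e return Fam G d -> (if e then ob G (Some d) else Fam G d) with
  | left e => fun _ => False_rect _ (n e)
  | right _ => fun s => s end.

Definition toF {L : locale} (i : L) (G : Psh L) : LFob i G (Some i) -> ob G (Some i) :=
  match em (i = i) as e return (if e then ob G (Some i) else Fam G i) -> ob G (Some i) with
  | left _ => fun s => s
  | right n => fun _ => False_rect _ (n eq_refl) end.

Lemma toFam_ofFam {L : locale} (i : L) (G : Psh L) d n s : toFam i G d n (ofFam i G d n s) = s.
Proof. unfold toFam, ofFam. destruct (em (d = i)). contradiction. reflexivity. Qed.

Lemma ofFam_toFam {L : locale} (i : L) (G : Psh L) d n s : ofFam i G d n (toFam i G d n s) = s.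
Proof. unfold toFam, ofFam. revert s. cbn [LFob]. destruct (em (d = i)). contradiction. reflexivity. Qed.

Lemma res_FF {L : locale} (i : L) Hi (G : Psh L) a b (h : lle a b) na nb x :
  toFam i G a na (LFres i Hi G (Some a) (Some b) h x) = fam_restr G h (toFam i G b nb x).
Proof. cbn [LFres]. unfold toFam, LFres_SS. revert x. cbn [LFob].
  destruct (em (b = i)); [contradiction|]. destruct (em (a = i)); [contradiction|]. reflexivity. Qed.

Lemma res_iF {L : locale} (i : L) Hi (G : Psh L) b (h : lle i b) nb x :
  toF i G (LFres i Hi G (Some i) (Some b) h x) = proj1_sig (toFam i G b nb x) i (eq_neq_llt eq_refl nb h).
Proof. cbn [LFres]. unfold toFam, toF, LFres_SS. revert x. cbn [LFob].
  destruct (em (b = i)); [contradiction|]. destruct (em (i = i)); [|contradiction].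
  intro x. f_equal. apply proof_irrelevance. Qed.

Lemma res_ii {L : locale} (i : L) Hi (G : Psh L) (h : lle i i) x :
  toF i G (LFres i Hi G (Some i) (Some i) h x) = res G (Some i) (Some i) h (toF i G x).
Proof. cbn [LFres]. unfold toF, LFres_SS. revert x. cbn [LFob].
  destruct (em (i = i)); [|contradiction]. reflexivity. Qed.

Lemma Fam_eq {L : locale} (G : Psh L) a (s t : Fam G a) :
  (forall c hc, proj1_sig s c hc = proj1_sig t c hc) -> s = t.
Proof. destruct s as [s ps], t as [t pt]; simpl; intro H.
  assert (s = t) by (apply functional_extensionality_dep; intro c;
    apply functional_extensionality_dep; intro hc; apply H).
  subst. f_equal. apply proof_irrelevance. Qed.

Lemma toF_inj {L : locale} (i : L) (G : Psh L) x y : toF i G x = toF i G y -> x = y.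
Proof. unfold toF. revert x y. cbn [LFob]. destruct (em (i = i)); [|contradiction]. auto. Qed.

Lemma toFam_inj {L : locale} (i : L) (G : Psh L) d n x y : toFam i G d n x = toFam i G d n y -> x = y.
Proof. unfold toFam. revert x y. cbn [LFob]. destruct (em (d = i)); [contradiction|]. auto. Qed.

Lemma llt_ne {L : locale} (i : L) (Hi : forall a : L, lle i a) c d : llt c d -> d <> i.
Proof. intros [h1 h2] e. subst. apply h2. apply lle_antisym; auto. Qed.

Lemma ne_llt {L : locale} (i : L) (Hi : forall a : L, lle i a) d : d <> i -> llt i d.
Proof. intros n. split; auto. Qed.

Lemma LF_presheaf {L : locale} (i : L) (Hi : forall a : L, lle i a) (G : Psh L)
  (HG : is_presheaf G) : is_presheaf (LF i Hi G).
Proof.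
  destruct HG as [G1 G2]. split.
  - intros [a|] h t; [|destruct t; reflexivity]. simpl in h.
    destruct (em (a = i)) as [e|n].
    + subst a. apply (toF_inj i G). cbn [LF res]. rewrite res_ii. apply G1.
    + apply (toFam_inj i G a n). cbn [LF res]. rewrite (res_FF i Hi G a a h n n).
      apply Fam_eq. intros c hc. simpl. f_equal. apply proof_irrelevance.
  - intros [a|] [b|] [c|] hxy hyz hxz t; simpl in hxy, hyz, hxz; try contradiction;
      try reflexivity.
    destruct (em (c = i)) as [ec|nc].
    { subst c. assert (b = i) by (apply lle_antisym; auto). subst b.
      assert (a = i) by (apply lle_antisym; auto). subst a.
      apply (toF_inj i G). cbn [LF res]. rewrite !res_ii. apply G2. }
    destruct (em (b = i)) as [eb|nb].
    { subst b. assert (a = i) by (apply lle_antisym; auto). subst a.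
      apply (toF_inj i G). cbn [LF res]. rewrite res_ii, !(res_iF i Hi G c _ nc).
      apply (proj2_sig (toFam i G c nc t)). }
    destruct (em (a = i)) as [ea|na].
    { subst a. apply (toF_inj i G). cbn [LF res]. rewrite !(res_iF i Hi G _ _ nb), (res_iF i Hi G _ _ nc).
      rewrite (res_FF i Hi G b c hyz nb nc). simpl. f_equal. apply proof_irrelevance. }
    apply (toFam_inj i G a na). cbn [LF res].
    rewrite (res_FF i Hi G a b hxy na nb), (res_FF i Hi G b c hyz nb nc), (res_FF i Hi G a c hxz na nc).
    apply Fam_eq. intros d hd. simpl. f_equal. apply proof_irrelevance.
Qed.

Lemma Fam_eq_i {L : locale} (i : L) (Hi : forall a : L, lle i a) (G : Psh L)
  (Ginj : forall (a b : L) (h : lle a b) (u v : ob G (Some b)),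
      res G (Some a) (Some b) h u = res G (Some a) (Some b) h v -> u = v)
  b (s t : Fam G b) p p' : proj1_sig s i p = proj1_sig t i p' -> s = t.
Proof.
  intro H. apply Fam_eq. intros c hc. apply (Ginj i c (Hi c)).
  rewrite (proj2_sig s i c p hc (Hi c)), (proj2_sig t i c p' hc (Hi c)). exact H.
Qed.

Lemma LF_mon {L : locale} (i : L) (Hi : forall a : L, lle i a) (G : Psh L)
  (HG : is_mon G) : is_mon (LF i Hi G).
Proof.
  destruct HG as [_ Ginj]. split.
  - exists tt. intros []. reflexivity.
  - intros a b h u v H. cbn [LF res] in H.
    destruct (em (b = i)) as [eb|nb].
    { subst b. assert (a = i) by (apply lle_antisym; auto). subst a.
      apply (toF_inj i G). apply (Ginj i i h). apply (f_equal (toF i G)) in H. rewrite !res_ii in H. exact H. }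
    apply (toFam_inj i G b nb).
    destruct (em (a = i)) as [ea|na].
    { subst a. apply (f_equal (toF i G)) in H. rewrite !(res_iF i Hi G b h nb) in H.
      exact (Fam_eq_i i Hi G Ginj b _ _ _ _ H). }
    apply (f_equal (toFam i G a na)) in H. rewrite !(res_FF i Hi G a b h na nb) in H.
    apply (f_equal (fun s => proj1_sig s i (ne_llt i Hi a na))) in H. simpl in H.
    exact (Fam_eq_i i Hi G Ginj b _ _ _ _ H).
Qed.

Lemma lle_llt_trans {L : locale} (c c' d : L) : lle c c' -> llt c' d -> llt c d.
Proof. intros h [h1 h2]. split. exact (lle_trans _ _ _ h h1).
  intro e. subst. apply h2. apply lle_antisym; auto. Qed.

Lemma toFam_pi {L : locale} (i : L) (G : Psh L) d n n' x : toFam i G d n x = toFam i G d n' x.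
Proof. f_equal. apply proof_irrelevance. Qed.

Lemma glue {L : locale} (HL : is_interval L) (i : L) (Hi : forall a : L, lle i a) (G : Psh L)
  a (na : a <> i) (R : option L -> Prop) (s : forall y, R y -> LFob i G y)
  (Hs : is_matching (LF i Hi G) R s) (Rin : forall c, llt c a -> R (Some c)) :
  exists t : LFob i G (Some a), forall c (hc : llt c a) (hy : R (Some c)),
    LFres i Hi G (Some c) (Some a) (proj1 hc) t = s (Some c) hy.
Proof.
  destruct HL as [Htot Hden].
  pose (val := fun c d (hcd : llt c d) (hda : llt d a) =>
     proj1_sig (toFam i G d (llt_ne i Hi c d hcd) (s (Some d) (Rin d hda))) c hcd).
  assert (indep : forall c d d' hcd hda hcd' hda', val c d hcd hda = val c d' hcd' hda').
  { assert (H1 : forall c d d' hcd hda hcd' hda', lle d d' -> val c d hcd hda = val c d' hcd' hda').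
    { intros c d d' hcd hda hcd' hda' h. unfold val.
      pose proof (Hs (Some d) (Some d') (Rin d hda) (Rin d' hda') h) as E.
      apply (f_equal (toFam i G d (llt_ne i Hi c d hcd))) in E.
      cbn [LF res] in E.
      rewrite (res_FF i Hi G d d' h _ (llt_ne i Hi c d' hcd')) in E.
      rewrite <- E. simpl. f_equal. apply proof_irrelevance. }
    intros. destruct (Htot d d') as [h|h]; [apply H1; auto| symmetry; apply H1; auto]. }
  pose (D := fun c (hc : llt c a) => constructive_indefinite_description _ (Hden c a hc)).
  pose (v := fun c (hc : llt c a) =>
     val c (proj1_sig (D c hc)) (proj1 (proj2_sig (D c hc))) (proj2 (proj2_sig (D c hc)))).
  assert (vE : forall c hc d hcd hda, v c hc = val c d hcd hda).
  { intros. unfold v. apply indep. }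
  assert (compat : forall c c' (hc : llt c a) (hc' : llt c' a) (h : lle c c'),
     res G (Some c) (Some c') h (v c' hc') = v c hc).
  { intros c c' hc hc' h. destruct (D c' hc') as [d [hcd hda]] eqn:ED.
    rewrite (vE c' hc' d hcd hda), (vE c hc d (lle_llt_trans c c' d h hcd) hda).
    unfold val. rewrite (toFam_pi i G d (llt_ne i Hi c' d hcd) (llt_ne i Hi c d (lle_llt_trans c c' d h hcd))).
    apply (proj2_sig (toFam i G d _ _)). }
  exists (ofFam i G a na (exist _ v compat)).
  intros c hc hy.
  destruct (em (c = i)) as [ec|nc].
  - subst c. apply (toF_inj i G). rewrite (res_iF i Hi G a _ na), toFam_ofFam. simpl.
    destruct (Hden i a hc) as [d [hcd hda]].
    rewrite (vE i _ d hcd hda). unfold val.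
    pose proof (Hs (Some i) (Some d) hy (Rin d hda) (proj1 hcd)) as E.
    apply (f_equal (toF i G)) in E. cbn [LF res] in E.
    rewrite (res_iF i Hi G d _ (llt_ne i Hi i d hcd)) in E. rewrite <- E.
    f_equal. apply proof_irrelevance.
  - apply (toFam_inj i G c nc). rewrite (res_FF i Hi G c a _ nc na), toFam_ofFam.
    apply Fam_eq. intros e he. simpl. rewrite (vE e _ c he hc). unfold val.
    rewrite (proof_irrelevance _ hy (Rin c hc)).
    rewrite (toFam_pi i G c (llt_ne i Hi e c he) nc). reflexivity.
Qed.

Lemma LF_sheaf {L : locale} (HL : is_interval L) (i : L) (Hi : forall a : L, lle i a) (G : Psh L)
  (HG : is_mon_presheaf G) : is_sheaf (LF i Hi G).
Proof.
  destruct HG as [HGp HGm].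
  pose proof (LF_presheaf i Hi G HGp) as [P1 _].
  pose proof (LF_mon i Hi G HGm) as [_ Minj].
  intros x R [Rle [Rdown [Rub Rlst]]] s Hs.
  destruct x as [a|].
  2:{ exists tt. split.
      - intros y hy hyx. destruct y; [simpl in hyx; contradiction|].
        destruct (s None hy). reflexivity.
      - intros [] _. reflexivity. }
  destruct (classic (R (Some a))) as [Ha|Hna].
  - exists (s (Some a) Ha). split.
    + intros y hy hyx. apply Hs.
    + intros t' Ht'. rewrite <- (Ht' (Some a) Ha (lle_refl a)). apply P1.
  - assert (Rin : forall c, llt c a -> R (Some c)).
    { intros c hc. apply NNPP. intro Hc.
      assert (lep (Some a) (Some c)).
      { apply Rlst. intros [d|] hd; [|exact I]. simpl.
        destruct (proj1 HL d c) as [h|h]; auto.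
        exfalso. apply Hc. exact (Rdown (Some c) (Some d) hd h). }
      destruct hc as [h1 h2]. apply h2. apply lle_antisym; auto. }
    assert (na : a <> i).
    { intro e. subst a. assert (lep (Some i) None).
      { apply Rlst. intros [d|] hd; [|exact I]. exfalso. apply Hna.
        assert (d = i) by (apply lle_antisym; [exact (Rle _ hd)| apply Hi]). subst d. exact hd. }
      exact H. }
    destruct (glue HL i Hi G a na R s Hs Rin) as [t Ht].
    exists t. split.
    + intros [c|] hy hyx; [|destruct (s None hy); reflexivity].
      assert (hc : llt c a).
      { split; [exact hyx|]. intro e; subst c. contradiction. }
      replace hyx with (proj1 hc) by apply proof_irrelevance. apply Ht.
    + intros t' Ht'. apply (Minj i a (Hi a)).
      pose proof (ne_llt i Hi a na) as hia.
      rewrite (Ht' (Some i) (Rin i hia) (Hi a)).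
      rewrite <- (Ht i hia (Rin i hia)). replace (Hi a) with (proj1 hia) by apply proof_irrelevance. reflexivity.
Qed.

Definition restrFam {L : locale} (G : Psh L) (HG : is_presheaf G) (a : L) (t : ob G (Some a)) : Fam G a :=
  exist (fun s : forall c : L, llt c a -> ob G (Some c) =>
           forall c c' (hc : llt c a) (hc' : llt c' a) (h : lle c c'),
             res G (Some c) (Some c') h (s c' hc') = s c hc)
    (fun c hc => res G (Some c) (Some a) (proj1 hc) t)
    (fun c c' hc hc' h => proj2 HG (Some c) (Some c') (Some a) h (proj1 hc') (proj1 hc) t).

Definition psi {L : locale} (i : L) (G : Psh L) (HG : is_presheaf G) (x : option L) :
  ob G x -> LFob i G x :=
  match x as x0 return ob G x0 -> LFob i G x0 with
  | None => fun _ => tt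
  | Some a => match em (a = i) as e return ob G (Some a) -> (if e then ob G (Some a) else Fam G a) with
      | left _ => fun t => t
      | right _ => fun t => restrFam G HG a t end
  end.

Lemma psi_i {L : locale} (i : L) (G : Psh L) HG t : toF i G (psi i G HG (Some i) t) = t.
Proof. unfold toF, psi. destruct (em (i = i)); [reflexivity|contradiction]. Qed.

Lemma psi_a {L : locale} (i : L) (G : Psh L) HG a n t : toFam i G a n (psi i G HG (Some a) t) = restrFam G HG a t.
Proof. unfold toFam, psi. destruct (em (a = i)); [contradiction|reflexivity]. Qed.

Lemma psh_iso_sym {L : locale} (G H : Psh L) (f : forall x, ob G x -> ob H x) :
  (forall x, (forall u v, f x u = f x v -> u = v) /\ (forall w, exists u, f x u = w)) ->
  (forall x y (h : lep x y) t, f x (res G x y h t) = res H x y h (f y t)) ->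
  psh_iso H G.
Proof.
  intros Hb Hn.
  exists (fun x w => proj1_sig (constructive_indefinite_description _ (proj2 (Hb x) w))).
  split.
  - intros x. split.
    + intros u v E.
      destruct (constructive_indefinite_description _ (proj2 (Hb x) u)) as [u' eu].
      destruct (constructive_indefinite_description _ (proj2 (Hb x) v)) as [v' ev].
      simpl in E. subst. reflexivity.
    + intros w. exists (f x w).
      destruct (constructive_indefinite_description _ (proj2 (Hb x) (f x w))) as [u' eu].
      simpl. apply (proj1 (Hb x)). exact eu.
  - intros x y h t.
    destruct (constructive_indefinite_description _ (proj2 (Hb y) t)) as [u eu].
    destruct (constructive_indefinite_description _ (proj2 (Hb x) (res H x y h t))) as [v ev].
    simpl. apply (proj1 (Hb x)). rewrite ev, Hn, eu. reflexivity.
Qed.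

Lemma LF_iso {L : locale} (HL : is_interval L) (i : L) (Hi : forall a : L, lle i a) (G : Psh L)
  (HG : is_mon_sheaf G) : psh_iso (LF i Hi G) G.
Proof.
  destruct HG as [HGp [HGs [[t0 Ht0] Ginj]]].
  apply (psh_iso_sym G (LF i Hi G) (psi i G HGp)).
  - intros [a|].
    2:{ split. intros u v _. rewrite (Ht0 u), (Ht0 v). reflexivity.
        intros []. exists t0. reflexivity. }
    destruct (em (a = i)) as [ea|na].
    { subst a. split.
      - intros u v E. apply (f_equal (toF i G)) in E. rewrite !psi_i in E. exact E.
      - intros w. exists (toF i G w). apply (toF_inj i G). apply psi_i. }
    split.
    + intros u v E. apply (f_equal (toFam i G a na)) in E. rewrite !psi_a in E.
      apply (f_equal (fun s => proj1_sig s i (ne_llt i Hi a na))) in E. simpl in E.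
      exact (Ginj i a _ u v E).
    + intros w. set (sw := toFam i G a na w).
      pose (R := fun y : option L => match y with None => True | Some c => llt c a end).
      pose (s' := fun y : option L => match y as y0 return R y0 -> ob G y0 with
                    | None => fun _ => t0 | Some c => fun hc => proj1_sig sw c hc end).
      assert (cov : is_covering_sieve (Some a) R).
      { split; [|split].
        - intros [c|] hc; [exact (proj1 hc)|exact I].
        - intros [c|] [d|] hd h; simpl in *; try contradiction; try exact I.
          exact (lle_llt_trans c d a h hd).
        - split.
          + intros [c|] hc; [exact (proj1 hc)|exact I].
          + intros [u|] Hu.
            2:{ exact (Hu (Some i) (ne_llt i Hi a na)). }
            simpl. destruct (proj1 HL a u) as [h|h]; [exact h|].
            destruct (em (u = a)) as [e|ne]; [subst; apply lle_refl|].
            destruct (proj2 HL u a (conj h ne)) as [e [hue hea]].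
            pose proof (Hu (Some e) hea) as heu. simpl in heu.
            exfalso. destruct hue as [h1 h2]. apply h2. apply lle_antisym; auto. }
      assert (mat : is_matching G R s').
      { intros [c|] [d|] hy hz h; simpl in h; try contradiction.
        - simpl. apply (proj2_sig sw).
        - rewrite (Ht0 (s' None hy)). apply Ht0.
        - apply Ht0. }
      destruct (HGs (Some a) R cov s' mat) as [t [Ht _]].
      exists t. apply (toFam_inj i G a na). rewrite psi_a. fold sw.
      apply Fam_eq. intros c hc. simpl. exact (Ht (Some c) hc (proj1 hc)).
  - intros [a|] [b|] h t; simpl in h; try contradiction; try reflexivity.
    destruct (em (b = i)) as [eb|nb].
    { subst b. assert (a = i) by (apply lle_antisym; auto). subst a.
      apply (toF_inj i G). cbn [LF res]. rewrite res_ii, !psi_i. reflexivity. }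
    destruct (em (a = i)) as [ea|na].
    { subst a. apply (toF_inj i G). cbn [LF res]. rewrite (res_iF i Hi G b h nb), psi_i, psi_a.
      simpl. f_equal. apply proof_irrelevance. }
    apply (toFam_inj i G a na). cbn [LF res].
    rewrite (res_FF i Hi G a b h na nb), !psi_a. apply Fam_eq. intros c hc. simpl.
    apply (proj2 HGp).
Qed.

Theorem lemma22 (L : locale) (HL : is_interval L) (i : L) (Hi : forall a : L, lle i a)
  (F : Psh L) (HF : is_mon_presheaf F) :
  is_mon_sheaf (LF i Hi F) /\
  is_mon_sheaf (LF i Hi (LF i Hi F)) /\
  psh_iso (LF i Hi (LF i Hi F)) (LF i Hi F).
Proof.
  assert (gen : forall G : Psh L, is_mon_presheaf G -> is_mon_sheaf (LF i Hi G)).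
  { intros G [HGp HGm]. split; [apply LF_presheaf; exact HGp|split].
    - apply LF_sheaf; auto. split; auto.
    - apply LF_mon; exact HGm. }
  pose proof (gen F HF) as H1.
  assert (H2 : is_mon_sheaf (LF i Hi (LF i Hi F))).
  { apply gen. destruct H1 as [a [_ c]]. split; auto. }
  split; [exact H1|split; [exact H2|]].
  apply LF_iso; auto.
Qed.
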